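(* Let $r\ge 2$ and $m$ be integers with $0\le 2m\le r$, $n=2r-4m$, and let $f:S^2(S^r(\mathbb{C}^2))\to S^{n}(\mathbb{C}^2)$ be an $\mathfrak{sl}_2(\mathbb{C})$-equivariant linear map, written $f=\sum_{k=0}^n q_k w_k$. Then there is $\lambda\in\mathbb{C}$ such that for all $0\le i,j\le r$, $$q_0(x_ix_j)=\begin{cases}(-1)^i\binom{2m}{i}\lambda & \text{if } j=2m-i,\\ 0&\text{otherwise.}\end{cases}$$ In particular, if $\lambda\in\mathbb{Q}$, then $q_k(x_ix_j)\in\mathbb{Q}$ for every $0\le k\le n$ and $0\le i,j\le r$.
   Context: $\mathfrak{sl}_2(\mathbb{C})$ has basis $X=\begin{pmatrix}0&1\\0&0\end{pmatrix}$, $H=\begin{pmatrix}1&0\\0&-1\end{pmatrix}$, $Y=\begin{pmatrix}0&0\\1&0\end{pmatrix}$, acting on the irreducible modules $S^d(\mathbb{C}^2)$. Let $x_0\in S^r(\mathbb{C}^2)$ be a highest weight vector and $x_i=Y^ix_0/i!$ ($0\le i\le r$), so $Yx_i=(i+1)x_{i+1}$, $Xx_i=(r-i+1)x_{i-1}$, $Hx_i=(r-2i)x_i$. Let $w_0\in S^n(\mathbb{C}^2)$ be a highest weight vector and $w_k=Y^kw_0/k!$ ($0\le k\le n$). Writing $f=\sum_{k=0}^n q_kw_k$ means $f(u)=\sum_k q_k(u)w_k$ for linear forms $q_k$ on $S^2(S^r(\mathbb{C}^2))$; $q_k(x_ix_j)$ denotes the value on the product $x_ix_j\in S^2(S^r(\mathbb{C}^2))$.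 *)

(* Defs.v *)
From HB Require Import structures.
From mathcomp Require Import all_boot all_order all_algebra.
Set Implicit Arguments. Unset Strict Implicit. Unset Printing Implicit Defensive.
Import Order.TTheory GRing.Theory Num.Theory.
Local Open Scope ring_scope.

(* The irreducible sl2-module S^d(C^2) is modelled on row vectors
   'rV[C]_(d.+1) of coordinates in the basis v_0, ..., v_d with
   v_i = Y^i v_0 / i!.  Operators act on the right: the row vector of
   coordinates of Z v_i is row i of the matrix (slY d), (slX d), (slH d). *)

Definition slY (C : numClosedFieldType) (d : nat) : 'M[C]_(d.+1) :=
  \matrix_(i < d.+1, j < d.+1) (if j == i.+1 :> nat then (i.+1)%:R else 0).

Definition slX (C : numClosedFieldType) (d : nat) : 'M[C]_(d.+1) :=
  \matrix_(i < d.+1, j < d.+1) (if j.+1 == i :> nat then ((d - i).+1)%:R else 0).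

Definition slH (C : numClosedFieldType) (d : nat) : 'M[C]_(d.+1) :=
  \matrix_(i < d.+1, j < d.+1) (if j == i then d%:R - 2 * i%:R else 0).

(* A linear map f : S^2(S^r(C^2)) -> S^n(C^2) is given by its values
   F i j = f(x_i x_j) (the coordinate vector (q_0(x_i x_j), ..., q_n(x_i x_j)))
   on the spanning products x_i x_j, subject to F i j = F j i.
   sl2 acts on S^2(V) by derivations: Z(x_i x_j) = (Z x_i) x_j + x_i (Z x_j). *)
Definition equiv_for (C : numClosedFieldType) (r n : nat)
  (F : 'I_r.+1 -> 'I_r.+1 -> 'rV[C]_n.+1) (Mr : 'M[C]_(r.+1)) (Mn : 'M[C]_(n.+1)) :=
  forall i j : 'I_r.+1,
    \sum_(l < r.+1) Mr i l *: F l j + \sum_(l < r.+1) Mr j l *: F i l = F i j *m Mn.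

(* f is a well-defined linear map on S^2(S^r(C^2)) which is sl2(C)-equivariant
   (X, H, Y span sl2(C)). *)
Definition sl2_equivariant_S2 (C : numClosedFieldType) (r n : nat)
  (F : 'I_r.+1 -> 'I_r.+1 -> 'rV[C]_n.+1) :=
  [/\ forall i j, F i j = F j i,
      equiv_for F (slX C r) (slX C n),
      equiv_for F (slH C r) (slH C n) &
      equiv_for F (slY C r) (slY C n)].

Definition is_rational (C : numClosedFieldType) (x : C) := exists q : rat, x = ratr q.

(* Main.v *)
Require Import Defs.
From HB Require Import structures.
From mathcomp Require Import all_boot all_order all_algebra.
From mathcomp Require Import zify ring.
Import Order.TTheory GRing.Theory Num.Theory.
Local Open Scope ring_scope.

Section Aux.
Variable C : numClosedFieldType.

Lemma sum_single N (i0 : 'I_N) (h : 'I_N -> C) :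
  (forall l, l != i0 -> h l = 0) -> \sum_l h l = h i0.
Proof.
move=> H; rewrite (bigD1 i0) //= big1 ?addr0 // => l /H //.
Qed.

Lemma rat_nat (k : nat) : is_rational (k%:R : C).
Proof. by exists k%:R; rewrite ratr_nat. Qed.

Lemma rat_add (x y : C) : is_rational x -> is_rational y -> is_rational (x + y).
Proof. by move=> [a ->] [b ->]; exists (a + b); rewrite rmorphD. Qed.

Lemma rat_mul (x y : C) : is_rational x -> is_rational y -> is_rational (x * y).
Proof. by move=> [a ->] [b ->]; exists (a * b); rewrite rmorphM. Qed.

Lemma rat_inv (x : C) : is_rational x -> is_rational (x^-1).
Proof. by move=> [a ->]; exists (a^-1); rewrite fmorphV. Qed.

Lemma rat_m1 : is_rational (-1 : C).
Proof. by exists (-1); rewrite rmorphN1. Qed.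

Lemma rat_0 : is_rational (0 : C).
Proof. by exists 0; rewrite rmorph0. Qed.

Lemma rat_exp (x : C) k : is_rational x -> is_rational (x ^+ k).
Proof. by move=> [a ->]; exists (a ^+ k); rewrite rmorphXn. Qed.

Lemma rat_sum N (h : 'I_N -> C) : (forall l, is_rational (h l)) ->
  is_rational (\sum_l h l).
Proof.
move=> H; apply: (big_ind (fun x => is_rational x)) => //.
- exact: rat_0.
- by move=> x y; apply: rat_add.
Qed.
End Aux.
Arguments sum_single {C N}.

Theorem mainTheorem2 (C : numClosedFieldType) (r m n : nat)
  (hr : (2 <= r)%N) (hm : (2 * m <= r)%N) (hn : n = (2 * r - 4 * m)%N)
  (F : 'I_r.+1 -> 'I_r.+1 -> 'rV[C]_n.+1)
  (hF : sl2_equivariant_S2 F) :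
  exists lambda : C,
    (forall i j : 'I_r.+1,
        F i j 0 ord0 =
        (if (i + j == 2 * m)%N then (-1) ^+ i * ('C(2 * m, i))%:R * lambda else 0))
    /\ (is_rational lambda ->
        forall (k : 'I_n.+1) (i j : 'I_r.+1), is_rational (F i j 0 k)).
Proof.
case: hF => Fsym hX hH hY.
have HH : forall (i j : 'I_r.+1) (k : 'I_n.+1), F i j 0 k != 0 ->
    (i + j = 2 * m + k)%N.
  move=> i j k nz.
  have := hH i j; move/(congr1 (fun M : 'rV[C]_n.+1 => M 0 k)).
  rewrite !mxE !summxE.
  rewrite (sum_single i); last by move=> l /negbTE hl; rewrite !mxE hl mul0r.
  rewrite (sum_single j); last by move=> l /negbTE hl; rewrite !mxE hl mul0r.
  rewrite (sum_single k); last by move=> l /negbTE hl; rewrite !mxE eq_sym hl mulr0.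
  rewrite !mxE !eqxx => E.
  have E2 : (r%:R - 2 * i%:R + (r%:R - 2 * j%:R)) = (n%:R - 2 * k%:R :> C).
    by apply: (mulIf nz); rewrite mulrDl E mulrC.
  have E3 : ((r + r + 2 * k)%N%:R : C) = (n + 2 * i + 2 * j)%N%:R.
    rewrite !natrD.
    apply/eqP; rewrite -subr_eq0; apply/eqP; move/eqP: E2; rewrite -subr_eq0 => /eqP E2.
    rewrite -E2; ring.
  move/eqP: E3; rewrite eqr_nat => /eqP E3.
  lia.
have YY : forall i j : 'I_r.+1, (i < r)%N -> (j < r)%N ->
    i.+1%:R * F (inord i.+1) j 0 0 + j.+1%:R * F i (inord j.+1) 0 0 = 0.
  move=> i j hi hj.
  have := hY i j; move/(congr1 (fun M : 'rV[C]_n.+1 => M 0 ord0)).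
  rewrite !mxE !summxE.
  rewrite (sum_single (inord i.+1)); last first.
    move=> l hl; rewrite !mxE; case: eqP => [e|]; last by rewrite mul0r.
    by case/eqP: hl; apply: val_inj; rewrite /= inordK ?e.
  rewrite (sum_single (inord j.+1)); last first.
    move=> l hl; rewrite !mxE; case: eqP => [e|]; last by rewrite mul0r.
    by case/eqP: hl; apply: val_inj; rewrite /= inordK ?e.
  rewrite big1; last by move=> l _; rewrite !mxE /=; apply: mulr0.
  by rewrite !mxE !inordK // !eqxx Fsym [F i _]Fsym.
pose a t := F (inord t) (inord (2 * m - t)) 0 0.
have rec : forall t, (t < 2 * m)%N -> t.+1%:R * a t.+1 + (2 * m - t)%:R * a t = 0.
  move=> t ht.
  have := YY (inord t) (inord (2 * m - t.+1)).
  rewrite !inordK; try lia.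
  have -> : (2 * m - t.+1).+1 = (2 * m - t)%N by lia.
  by move=> ->; try lia.
have cf : forall t, (t <= 2 * m)%N -> a t = (-1) ^+ t * 'C(2 * m, t)%:R * a 0%N.
  elim=> [|t IH] ht; first by rewrite bin0 expr0 !mul1r.
  have nz : (t.+1%:R : C) != 0 by rewrite pnatr_eq0.
  apply: (mulfI nz).
  have := rec t ht; move/eqP; rewrite addr_eq0 => /eqP ->.
  rewrite IH; last by lia.
  have hb : (t.+1%:R * 'C(2 * m, t.+1)%:R : C) = (2 * m - t)%:R * 'C(2 * m, t)%:R.
    by rewrite -!natrM mul_bin_left.
  rewrite [RHS](_ : _ = -1 * (-1) ^+ t * (t.+1%:R * 'C(2 * m, t.+1)%:R) * a 0%N); last first.
    by rewrite exprS; ring.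
  rewrite hb; ring.
have P1 : forall i j : 'I_r.+1, F i j 0 ord0 =
    (if (i + j == 2 * m)%N then (-1) ^+ i * ('C(2 * m, i))%:R * a 0%N else 0).
  move=> i j; case: ifP => E.
    move/eqP: E => E.
    rewrite -cf; last by lia.
    rewrite /a; congr (F _ _ 0 0); apply: val_inj; rewrite /= inordK //; lia.
  case: (eqVneq (F i j 0 ord0) 0) => // nz.
  by move: (HH _ _ _ nz); rewrite addn0 => e; rewrite e eqxx in E.
exists (a 0%N); split; first exact: P1.
move=> ra.
have XX : forall (i j : 'I_r.+1) (k : 'I_n.+1), (k < n)%N ->
    F i j 0 (inord k.+1) =
    (\sum_l (slX C r i l *: F l j) 0 k + \sum_l (slX C r j l *: F i l) 0 k)
      / ((n - k.+1).+1)%:R.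
  move=> i j k hk.
  have := hX i j; move/(congr1 (fun M : 'rV[C]_n.+1 => M 0 k)).
  rewrite !mxE !summxE.
  rewrite [X in _ = X](sum_single (inord k.+1)); last first.
    move=> l hl; rewrite !mxE; case: eqP => [e|]; last by rewrite mulr0.
    by case/eqP: hl; apply: val_inj; rewrite /= inordK ?e.
  rewrite !mxE inordK // eqxx => ->.
  by rewrite mulfK // pnatr_eq0.
have RR : forall t, (t <= n)%N -> forall i j : 'I_r.+1, is_rational (F i j 0 (inord t)).
  elim=> [|t IH] ht i j.
    have -> : inord 0 = ord0 :> 'I_n.+1 by apply: val_inj; rewrite /= inordK.
    rewrite P1; case: ifP => _; last exact: rat_0.
    apply: rat_mul => //; apply: rat_mul; [exact: rat_exp (rat_m1 _) | exact: rat_nat].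
  have -> : inord t.+1 = inord (inord t : 'I_n.+1).+1 :> 'I_n.+1.
    by rewrite inordK //; lia.
  rewrite XX; last by rewrite inordK; lia.
  apply: rat_mul; last exact/rat_inv/rat_nat.
  apply: rat_add; apply: rat_sum => l; rewrite !mxE; (apply: rat_mul;
    [case: ifP => _; [exact: rat_nat | exact: rat_0] | apply: IH; lia]).
move=> k i j; rewrite -(inord_val k); apply: RR; rewrite -ltnS; exact: ltn_ord.
Qed.
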